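(* Let $n\geq 5$. Every optimal anticode of diameter $2$ in $S_n$ with respect to the Kendall's $\tau$-distance is a sphere of radius $1$, i.e., a set of the form $\{\pi\in S_n : d_K(\sigma,\pi)\leq 1\}$ for some $\sigma\in S_n$; its size is $n$.
   Context: $S_n$ denotes the set of all permutations of $[n]=\{1,\dots,n\}$, written $\sigma=[\sigma(1),\dots,\sigma(n)]$. An adjacent transposition applied to $\sigma$ exchanges the entries in positions $i$ and $i+1$ for some $1\leq i\leq n-1$. The Kendall's $\tau$-distance $d_K(\sigma,\pi)$ is the minimum number of adjacent transpositions needed to transform $\sigma$ into $\pi$. An anticode of diameter $D$ is a subset $\mathcal{A}\subseteq S_n$ with $d_K(x,y)\leq D$ for all $x,y\in\mathcal{A}$; it is optimal if it has the largest possible size among all anticodes of diameter $D$ in $S_n$. *)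

(* Defs.v *)
From mathcomp Require Import all_boot all_order all_fingroup.
Set Implicit Arguments. Unset Strict Implicit. Unset Printing Implicit Defensive.

(* Permutations of [n] are modelled as 'S_n = {perm 'I_n} (positions and
   values 0..n-1).  An adjacent transposition at positions (a, a+1) turns
   sigma into  tperm a b * sigma  (with val b = (val a).+1), whose value at
   position k is sigma (tperm a b k), i.e. the entries at positions a and a+1
   are exchanged. *)

Definition apply_adj n (l : seq ('I_n * 'I_n)) (s : 'S_n) : 'S_n :=
  foldr (fun p q => (tperm p.1 p.2 * q)%g) s l.

Definition adjacent_pairs n (l : seq ('I_n * 'I_n)) : bool :=
  all (fun p => val p.2 == (val p.1).+1) l.

Definition dK_le n (k : nat) (s t : 'S_n) : Prop :=
  exists l : seq ('I_n * 'I_n),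
    [/\ size l <= k, adjacent_pairs l & t = apply_adj l s].

Definition is_anticode n (D : nat) (A : {set 'S_n}) : Prop :=
  forall x y, x \in A -> y \in A -> dK_le D x y.

Definition optimal_anticode n (D : nat) (A : {set 'S_n}) : Prop :=
  is_anticode D A /\ forall B : {set 'S_n}, is_anticode D B -> #|B| <= #|A|.

(* Main.v *)
Require Import Defs.
From mathcomp Require Import all_boot all_order all_fingroup.
From mathcomp Require Import zify.
Set Implicit Arguments. Unset Strict Implicit. Unset Printing Implicit Defensive.
Local Open Scope group_scope.

Lemma valE n (x : 'I_n) : val x = nat_of_ord x.
Proof. by []. Qed.
Ltac nlia_pre := try rewrite !valE; repeat match goal with
  | H : _ |- _ => progress (try rewrite !valE in H) end;
  repeat match goal with
  | H : @eq (Equality.sort _) ?x ?y |- _ => change (@eq nat x y) in H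
  | H : not (@eq (Equality.sort _) ?x ?y) |- _ => change (not (@eq nat x y)) in H
  | |- @eq (Equality.sort _) ?x ?y => change (@eq nat x y)
  | |- not (@eq (Equality.sort _) ?x ?y) => change (not (@eq nat x y))
  end.
Ltac nlia := nlia_pre; lia.

Ltac crush := repeat (case: ifP => /eqP ? /=); repeat (case: eqP => /= ?); nlia.
Ltac crushl := repeat (case: ifP => /eqP ? /=); repeat (case: eqP => /= ?); lia.

Section S.
Variable n : nat.
Implicit Types s t : 'S_n.

Lemma ordeqE (x y : 'I_n) : (x == y) = (val x == val y).
Proof. by []. Qed.



Lemma val_tperm (a b x : 'I_n) :
  val (tperm a b x) = if val x == val a then val b else if val x == val b then val a else val x.
Proof.
case: tpermP => [->|->|/eqP Ha /eqP Hb]; rewrite ?eqxx //.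
  by case: ifP => // /eqP/val_inj ->.
by rewrite -!ordeqE (negbTE Ha) (negbTE Hb).
Qed.

Definition inv_at s (p : 'I_n * 'I_n) : bool := s^-1 p.2 < s^-1 p.1.
Definition flip s (a b : 'I_n) (p : 'I_n * 'I_n) : bool :=
  ((s^-1 p.1 == a) && (s^-1 p.2 == b)) || ((s^-1 p.1 == b) && (s^-1 p.2 == a)).

Lemma L1 s (a b : 'I_n) p : val b = (val a).+1 -> p.1 != p.2 ->
  inv_at (tperm a b * s) p = inv_at s p (+) flip s a b p.
Proof.
move=> hb hp; rewrite /inv_at /flip invMg tpermV !permM.
have : s^-1 p.1 != s^-1 p.2 by rewrite (inj_eq perm_inj).
move: (s^-1 p.1) (s^-1 p.2) => P Q.
rewrite !ordeqE !val_tperm -[Q < P]/(val Q < val P).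
move: (val P) (val Q) (val a) (val b) hb => P' Q' a' b' ->.
case: (P' =P a') => ? ; case: (Q' =P a') => ?; case: (P' =P a'.+1) => ?; case: (Q' =P a'.+1) => ?; simpl; lia.
Qed.

Definition adj (p : 'I_n * 'I_n) : bool := val p.2 == (val p.1).+1.

Lemma tpermMM (a b : 'I_n) s : tperm a b * (tperm a b * s) = s.
Proof. by apply/permP => x; rewrite !permM tpermK. Qed.

Lemma apply_adj_cons p l s : apply_adj (p :: l) s = tperm p.1 p.2 * apply_adj l s.
Proof. by []. Qed.

Lemma apply_adj_cat l1 l2 s : apply_adj (l1 ++ l2) s = apply_adj l1 (apply_adj l2 s).
Proof. by rewrite /apply_adj foldr_cat. Qed.

Lemma apply_adj_mulr l s g : apply_adj l (s * g) = apply_adj l s * g.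
Proof. by elim: l => //= p l IH; rewrite IH mulgA. Qed.

Lemma apply_adj_rev l s : apply_adj (rev l) (apply_adj l s) = s.
Proof.
elim: l s => //= p l IH s.
by rewrite rev_cons -cats1 apply_adj_cat /= tpermMM IH.
Qed.

Lemma dK_sym k s t : dK_le k s t -> dK_le k t s.
Proof.
case=> l [hl ha ->]; exists (rev l); split.
- by rewrite size_rev.
- by rewrite /adjacent_pairs all_rev.
- by rewrite apply_adj_rev.
Qed.

Lemma dK_trans k1 k2 s t u : dK_le k1 s t -> dK_le k2 t u -> dK_le (k1 + k2) s u.
Proof.
case=> l1 [h1 a1 ->]; case=> l2 [h2 a2 ->]; exists (l2 ++ l1); split.
- by rewrite size_cat addnC leq_add.
- by rewrite /adjacent_pairs all_cat; apply/andP.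
- by rewrite apply_adj_cat.
Qed.

Lemma dK_mulr k s t g : dK_le k s t -> dK_le k (s * g) (t * g).
Proof. by case=> l [h1 a1 ->]; exists l; split => //; rewrite apply_adj_mulr. Qed.

Lemma dK_mulr_iff k s t g : dK_le k (s * g) (t * g) <-> dK_le k s t.
Proof.
split; last exact: dK_mulr.
by move=> /(dK_mulr g^-1); rewrite !mulgK.
Qed.

Lemma dK_refl k s : dK_le k s s.
Proof. by exists [::]. Qed.

Lemma dK_step (a b : 'I_n) s : val b = (val a).+1 -> dK_le 1 s (tperm a b * s).
Proof. by move=> h; exists [:: (a, b)]; rewrite /adjacent_pairs /= h eqxx. Qed.

Lemma odd_apply l s : adjacent_pairs l ->
  odd_perm (apply_adj l s) = odd (size l) (+) odd_perm s.
Proof.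
elim: l => //= p l IH /andP [hp hl].
rewrite odd_permM IH // odd_tperm.
have -> : p.1 != p.2 by rewrite ordeqE; move/eqP: hp => hp; apply/eqP; nlia.
by rewrite addbA.
Qed.

Lemma dK2_cases s t : dK_le 2 s t ->
  [\/ t = s,
      exists a b : 'I_n, val b = (val a).+1 /\ t = tperm a b * s |
      exists a b c d : 'I_n, [/\ val b = (val a).+1, val d = (val c).+1 &
         t = tperm c d * (tperm a b * s)]].
Proof.
case=> l [hl ha ->].
case: l hl ha => [|p [|q [|r l]]] //= hl.
- by move=> _; constructor 1.
- rewrite /adjacent_pairs /= andbT => /eqP hp; constructor 2.
  by exists p.1, p.2.
- rewrite /adjacent_pairs /= andbT => /andP[/eqP hp /eqP hq]; constructor 3.
  by exists q.1, q.2, p.1, p.2.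
Qed.

Lemma odd_step (a b : 'I_n) s : val b = (val a).+1 ->
  odd_perm (tperm a b * s) = ~~ odd_perm s.
Proof.
move=> h; rewrite odd_permM odd_tperm.
by have -> : a != b by rewrite ordeqE h; apply/eqP; nlia.
Qed.

Lemma dK2_diff s t : dK_le 2 s t -> odd_perm s != odd_perm t ->
  exists a b : 'I_n, val b = (val a).+1 /\ t = tperm a b * s.
Proof.
case/dK2_cases => [->|//|[a [b [c [d [h1 h2 ->]]]]]]; first by rewrite eqxx.
by rewrite !odd_step // negbK eqxx.
Qed.

Lemma dK2_same s t : dK_le 2 s t -> odd_perm s = odd_perm t -> t != s ->
  exists a b c d : 'I_n, [/\ val b = (val a).+1, val d = (val c).+1, val c != val a &
         t = tperm c d * (tperm a b * s)].
Proof.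
case/dK2_cases => [->|[a [b [h ->]]]|[a [b [c [d [h1 h2 ->]]]]]]; first by rewrite eqxx.
  by rewrite odd_step //; case: (odd_perm s).
move=> _ hne; exists a, b, c, d; split => //.
apply/negP => /eqP hca.
have ec : c = a by apply: val_inj.
have ed : d = b by apply: val_inj; rewrite h1 h2 hca.
by move: hne; rewrite ec ed tpermMM eqxx.
Qed.

Definition Dset s t := [set p : 'I_n * 'I_n | (p.1 < p.2) && (inv_at s p != inv_at t p)].

Lemma Dset_refl s : Dset s s = set0.
Proof. by apply/setP => p; rewrite !inE eqxx andbF. Qed.

Lemma Dset_step s t (a b : 'I_n) : val b = (val a).+1 ->
  #|Dset s (tperm a b * t)| <= (#|Dset s t|).+1.
Proof.
move=> hb.
set F := [set p : 'I_n * 'I_n | (p.1 < p.2) && flip t a b p].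
have hF : #|F| <= 1.
  rewrite -(cards1 (if t a < t b then (t a, t b) else (t b, t a))).
  apply: subset_leq_card; apply/subsetP => p; rewrite !inE /flip.
  case: p => [p1 p2] /=.
  case/andP => hlt /orP [/andP [/eqP h1 /eqP h2]|/andP [/eqP h1 /eqP h2]].
    have e1 : p1 = t a by rewrite -h1 permKV.
    have e2 : p2 = t b by rewrite -h2 permKV.
    by move: hlt; rewrite e1 e2 => ->.
  have e1 : p1 = t b by rewrite -h1 permKV.
  have e2 : p2 = t a by rewrite -h2 permKV.
  move: hlt; rewrite e1 e2 => hlt.
  by have -> : (t a < t b) = false by apply/negbTE; rewrite -leqNgt ltnW.
have sub : Dset s (tperm a b * t) \subset Dset s t :|: F.
  apply/subsetP => p; rewrite !inE => /andP [hlt].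
  rewrite L1 //; last by apply/eqP => e; move: hlt; rewrite e ltnn.
  rewrite hlt /=; case: (flip t a b p) => /=; rewrite ?addbF ?orbT //.
  by move=> ->.
apply: leq_trans (subset_leq_card sub) _.
rewrite cardsU; apply: leq_trans (leq_subr _ _) _.
by rewrite -addn1 leq_add2l.
Qed.

Lemma Dbound k s t : dK_le k s t -> #|Dset s t| <= k.
Proof.
case=> l [hl ha ->]; apply: leq_trans hl.
elim: l ha => [|p l IH] /=; first by rewrite Dset_refl cards0.
case/andP => /eqP hp hl.
by apply: leq_trans (Dset_step _ _ hp) _; rewrite ltnS IH.
Qed.

Lemma Dset_xor s t u p : (p \in Dset t u) = (p.1 < p.2) &&
   ((p \in Dset s t) != (p \in Dset s u)).
Proof.
rewrite !inE; case: (p.1 < p.2) => //=.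
by case: (inv_at s p); case: (inv_at t p); case: (inv_at u p).
Qed.

Lemma mono_perm_id (m : 'S_n) : (forall i j : 'I_n, i < j -> m i < m j) -> m = 1.
Proof.
move=> hm.
have ge : forall m' : 'S_n, (forall i j : 'I_n, i < j -> m' i < m' j) ->
    forall i : 'I_n, i <= m' i.
  move=> m' hm' i; have [k hk] : exists k, val i = k by exists (val i).
  elim: k i hk => [|k IH] i hk; first by rewrite hk.
  have hkn : k < n by have := ltn_ord i; nlia.
  have h1 : Ordinal hkn < i by rewrite /=; nlia.
  have := hm' _ _ h1; have := IH (Ordinal hkn) erefl => /= ? ?; nlia.
have hinv : forall i j : 'I_n, i < j -> m^-1 i < m^-1 j.
  move=> i j hij; case: (ltngtP (m^-1 i) (m^-1 j)) => // [h|/val_inj e].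
    by move: (hm _ _ h); rewrite !permKV => h'; move: hij; rewrite ltnNge ltnW.
  by move: hij; rewrite -(permKV m i) -(permKV m j) e ltnn.
apply/permP => i; rewrite perm1; apply: val_inj => /=.
have h1 := ge m hm i; have h2 := ge _ hinv (m i); rewrite permK in h2.
apply/eqP; rewrite eqn_leq h2; exact: h1.
Qed.

Lemma Dset0_eq s t : Dset s t = set0 -> s = t.
Proof.
move=> h.
have hp : forall u v : 'I_n, (s^-1 u < s^-1 v) = (t^-1 u < t^-1 v).
  move=> u v.
  have key : forall u v : 'I_n, u < v -> (s^-1 v < s^-1 u) = (t^-1 v < t^-1 u).
    move=> u' v' huv.
    have : (u', v') \notin Dset s t by rewrite h inE.
    by rewrite inE /= huv /inv_at /= negbK => /eqP.
  case: (ltngtP u v) => [huv|huv|/val_inj e].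
  - have := key _ _ huv.
    have nu : s^-1 u != s^-1 v by rewrite (inj_eq perm_inj) ordeqE; apply/eqP; nlia.
    have nt : t^-1 u != t^-1 v by rewrite (inj_eq perm_inj) ordeqE; apply/eqP; nlia.
    move: nu nt; rewrite !ordeqE; nlia.
  - exact: key.
  - by rewrite e !ltnn.
have : s * t^-1 = 1.
  apply: mono_perm_id => i j hij; rewrite !permM.
  by rewrite -hp !permK.
by move/eqP; rewrite -(eq_mulgV1) => /eqP.
Qed.

Lemma inv_at1 p : inv_at 1 p = (p.2 < p.1).
Proof. by rewrite /inv_at invg1 !perm1. Qed.

Lemma Dmem (i j k l : 'I_n) p : val j = (val i).+1 -> val l = (val k).+1 ->
  (p \in Dset 1 (tperm k l * (tperm i j * 1))) = (p.1 < p.2) &&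
   (((p.1 == i) && (p.2 == j)) (+)
    (((tperm i j p.1 == k) && (tperm i j p.2 == l)) ||
     ((tperm i j p.1 == l) && (tperm i j p.2 == k)))).
Proof.
move=> hj hl; case: p => p1 p2; rewrite inE; case hlt: (p1 < p2) => //=.
have hne : p1 != p2 by apply/eqP => e; move: hlt; rewrite e ltnn.
rewrite L1 // L1 // inv_at1.
have -> : (p2 < p1) = false by apply/negbTE; rewrite -leqNgt ltnW.
rewrite /flip !invg1 !perm1 mulg1 tpermV /=.
have -> : (p1 == j) && (p2 == i) = false.
  apply/negbTE; rewrite !ordeqE; apply/negP => /andP [/eqP e1 /eqP e2]; nlia.
by rewrite orbF; case: (_ (+) _).
Qed.

Lemma K1 (z : 'S_n) (a1 b1 c1 d1 a2 b2 c2 d2 a3 b3 c3 d3 : 'I_n) :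
  val b1 = (val a1).+1 -> val d1 = (val c1).+1 -> val c1 != val a1 ->
  val b2 = (val a2).+1 -> val d2 = (val c2).+1 -> val c2 != val a2 ->
  val b3 = (val a3).+1 -> val d3 = (val c3).+1 -> val c3 != val a3 ->
  val a1 != val a2 -> val a1 != val a3 -> val a2 != val a3 ->
  z = tperm c1 d1 * (tperm a1 b1 * 1) ->
  z = tperm c2 d2 * (tperm a2 b2 * 1) ->
  z = tperm c3 d3 * (tperm a3 b3 * 1) ->
  dK_le 2 1 z -> False.
Proof.
move=> hb1 hd1 hc1 hb2 hd2 hc2 hb3 hd3 hc3 h12 h13 h23 e1 e2 e3 hdk.
have mem : forall a b c d : 'I_n, val b = (val a).+1 -> val d = (val c).+1 ->
   val c != val a -> z = tperm c d * (tperm a b * 1) -> (a, b) \in Dset 1 z.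
  move=> a b c d hb hd hc ->; rewrite Dmem //= !eqxx /= tpermL tpermR !ordeqE.
  have -> : a < b by rewrite /= -valE hb.
  move: hc; nlia.
have sub : (a1, b1) |: ((a2, b2) |: [set (a3, b3)]) \subset Dset 1 z.
  by rewrite !subUset !sub1set (mem a1 b1 c1 d1) // (mem a2 b2 c2 d2) // (mem a3 b3 c3 d3).
have := leq_trans (subset_leq_card sub) (Dbound hdk).
rewrite !cardsU1 cards1 !inE !xpair_eqE !ordeqE.
move: h12 h13 h23; nlia.
Qed.

Lemma ord_eq_adj (a b a' b' : 'I_n) : val b = (val a).+1 -> val b' = (val a').+1 ->
  val a = val a' -> a = a' /\ b = b'.
Proof.
move=> h h' e; split; apply: val_inj => //.
by rewrite h h' e.
Qed.

Lemma Kpre x z y : x != z ->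
  (exists a b : 'I_n, val b = (val a).+1 /\ y = tperm a b * x) ->
  (exists c d : 'I_n, val d = (val c).+1 /\ z = tperm c d * y) ->
  exists a b c d : 'I_n, [/\ val b = (val a).+1, val d = (val c).+1, val c != val a,
     y = tperm a b * x & z * x^-1 = tperm c d * (tperm a b * 1)].
Proof.
move=> hxz [a [b [hb ey]]] [c [d [hd ez]]].
exists a, b, c, d; split => //.
- apply/negP => /eqP e; have [ec ed] := ord_eq_adj hd hb e.
  by move: hxz; rewrite ez ey ec ed tpermMM eqxx.
- by rewrite ez ey -mulgA -mulgA mulgV.
Qed.

Lemma K (x z y1 y2 y3 : 'S_n) : x != z -> y1 != y2 -> y1 != y3 -> y2 != y3 ->
  dK_le 2 x z ->
  (forall y, y \in [:: y1; y2; y3] ->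
     (exists a b : 'I_n, val b = (val a).+1 /\ y = tperm a b * x) /\
     (exists c d : 'I_n, val d = (val c).+1 /\ z = tperm c d * y)) -> False.
Proof.
move=> hxz h12 h13 h23 hd hy.
have [u1 v1] := hy y1 (mem_head _ _).
have [a1 [b1 [c1 [d1 [hb1 hd1 hc1 ey1 ez1]]]]] := Kpre hxz u1 v1.
have m2 : y2 \in [:: y1; y2; y3] by rewrite !inE eqxx orbT.
have [u2 v2] := hy y2 m2.
have [a2 [b2 [c2 [d2 [hb2 hd2 hc2 ey2 ez2]]]]] := Kpre hxz u2 v2.
have m3 : y3 \in [:: y1; y2; y3] by rewrite !inE eqxx !orbT.
have [u3 v3] := hy y3 m3.
have [a3 [b3 [c3 [d3 [hb3 hd3 hc3 ey3 ez3]]]]] := Kpre hxz u3 v3.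
have dist : forall (a b a' b' : 'I_n) (y y' : 'S_n), val b = (val a).+1 ->
    val b' = (val a').+1 -> y = tperm a b * x -> y' = tperm a' b' * x -> y != y' ->
    val a != val a'.
  move=> a b a' b' y y' hb hb' ey ey' hne; apply/negP => /eqP e.
  by have [ea eb] := ord_eq_adj hb hb' e; move: hne; rewrite ey ey' ea eb eqxx.
apply: (K1 hb1 hd1 hc1 hb2 hd2 hc2 hb3 hd3 hc3 _ _ _ ez1 ez2 ez3).
- exact: (dist _ _ _ _ _ _ hb1 hb2 ey1 ey2 h12).
- exact: (dist _ _ _ _ _ _ hb1 hb3 ey1 ey3 h13).
- exact: (dist _ _ _ _ _ _ hb2 hb3 ey2 ey3 h23).
- by have := dK_mulr x^-1 hd; rewrite mulgV.
Qed.
End S.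

Lemma lt_card3 (x y : bool) m : 3 < m -> m <= x + (y + 1) -> False.
Proof. by case: x; case: y => /=; lia. Qed.

Section Family.
Variables (T U : finType).

Lemma two_eq (X : {set T}) a b : #|X| = 2 -> a \in X -> b \in X -> a != b ->
  X = [set a; b].
Proof.
move=> hX ha hb hab; apply/esym/eqP; rewrite eqEcard cards2 hab hX leqnn andbT.
by rewrite !subUset !sub1set ha hb.
Qed.

Lemma two_ex (X : {set T}) a : #|X| = 2 -> a \in X -> exists b, b != a /\ X = [set a; b].
Proof.
move=> hX ha.
have : exists b, (b \in X) && (b != a).
  apply/existsP; apply: contraT; rewrite negb_exists => /forallP hall.
  have : X \subset [set a].
    apply/subsetP => x hx; have := hall x; rewrite hx /= negbK inE => /eqP ->.
    by rewrite eqxx.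
  by move/subset_leq_card; rewrite hX cards1.
case=> b /andP [hb hba]; exists b; split => //.
by apply: (two_eq hX ha hb); rewrite eq_sym.
Qed.

Lemma meet_el (X Y : {set T}) : X :&: Y != set0 -> exists x, x \in X /\ x \in Y.
Proof. by case/set0Pn => x; rewrite inE => /andP [h1 h2]; exists x. Qed.

Lemma family (Z : {set U}) (phi : U -> {set T}) :
  {in Z &, injective phi} -> (forall z, z \in Z -> #|phi z| = 2) ->
  (forall z z', z \in Z -> z' \in Z -> phi z :&: phi z' != set0) ->
  3 < #|Z| -> exists p, forall z, z \in Z -> p \in phi z.
Proof.
move=> inj h2 hm hZ.
have [z1 hz1] : exists z1, z1 \in Z.
  by apply/set0Pn; apply: contraTneq hZ => ->; rewrite cards0.
have [p hp1] : exists p, p \in phi z1.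
  by apply/set0Pn; apply/negP => /eqP e; move: (h2 _ hz1); rewrite e cards0.
have [q [hqp e1]] := two_ex (h2 _ hz1) hp1.
case: (boolP [forall z in Z, p \in phi z]) => [/forall_inP h|]; first by exists p.
rewrite negb_forall_in => /exists_inP [z2 hz2 hp2].
case: (boolP [forall z in Z, q \in phi z]) => [/forall_inP h|]; first by exists q.
rewrite negb_forall_in => /exists_inP [z3 hz3 hq3].
have hq2 : q \in phi z2.
  have [x [hx1 hx2]] := meet_el (hm _ _ hz1 hz2).
  move: hx1; rewrite e1 !inE => /orP [/eqP ex|/eqP ex]; last by rewrite -ex.
  by move: hp2; rewrite -ex hx2.
have hp3 : p \in phi z3.
  have [x [hx1 hx2]] := meet_el (hm _ _ hz1 hz3).
  move: hx1; rewrite e1 !inE => /orP [/eqP ex|/eqP ex]; first by rewrite -ex.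
  by move: hq3; rewrite -ex hx2.
have [r [hrq e2]] := two_ex (h2 _ hz2) hq2.
have hrp : r != p by apply: contraNneq hp2 => <-; rewrite e2 !inE eqxx orbT.
have hr3 : r \in phi z3.
  have [x [hx2 hx3]] := meet_el (hm _ _ hz2 hz3).
  move: hx2; rewrite e2 !inE => /orP [/eqP ex|/eqP ex]; last by rewrite -ex.
  by move: hq3; rewrite -ex hx3.
have e3 : phi z3 = [set p; r] by apply: (two_eq (h2 _ hz3) hp3 hr3); rewrite eq_sym.
have : ~~ (Z \subset z1 |: (z2 |: [set z3])).
  apply/negP => /subset_leq_card; rewrite !cardsU1 cards1.
  by move=> h; apply: (lt_card3 hZ h).
case/subsetPn => z4 hz4; rewrite !inE => hn.
have ne : forall z, z \in Z -> z != z4 -> phi z4 != phi z.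
  move=> z hz hne; apply/negP => /eqP e; move/negP: hne; apply.
  by apply/eqP; apply: inj => //; rewrite e.
have n1 : phi z4 != phi z1 by apply: ne => //; apply: contraNneq hn => ->; rewrite eqxx.
have n2 : phi z4 != phi z2 by apply: ne => //; apply: contraNneq hn => ->; rewrite eqxx !orbT.
have n3 : phi z4 != phi z3 by apply: ne => //; apply: contraNneq hn => ->; rewrite eqxx !orbT.
have [x [hx4 hx1]] := meet_el (hm _ _ hz4 hz1).
move: hx1; rewrite e1 !inE => /orP [/eqP ex|/eqP ex]; subst x.
- have [w [hwp e4]] := two_ex (h2 _ hz4) hx4.
  have [y [hy4 hy2]] := meet_el (hm _ _ hz4 hz2).
  move: hy4; rewrite e4 !inE => /orP [/eqP ey|/eqP ey]; subst y; first by rewrite hy2 in hp2.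
  move: hy2; rewrite e2 !inE => /orP [/eqP ew|/eqP ew]; subst w.
  + by move: n1; rewrite e4 e1 eqxx.
  + by move: n3; rewrite e4 e3 eqxx.
- have [w [hwq e4]] := two_ex (h2 _ hz4) hx4.
  have [y [hy4 hy3]] := meet_el (hm _ _ hz4 hz3).
  move: hy4; rewrite e4 !inE => /orP [/eqP ey|/eqP ey]; subst y; first by rewrite hy3 in hq3.
  move: hy3; rewrite e3 !inE => /orP [/eqP ew|/eqP ew]; subst w.
  + by move: n1; rewrite e4 e1 setUC eqxx.
  + by move: n2; rewrite e4 e2 eqxx.
Qed.
End Family.


Section S2.
Variable n : nat.
Implicit Types s t : 'S_n.

Lemma rep4 z : dK_le 2 1 z -> ~~ odd_perm z -> z != 1 ->
  exists i j k l : 'I_n, [/\ val j = (val i).+1, val l = (val k).+1, val k != val i &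
     z = tperm k l * (tperm i j * 1)].
Proof.
move=> hd ho hz; have := dK2_same hd; rewrite odd_perm1 (negbTE ho) => /(_ erefl hz).
case=> [i [j [k [l [h1 h2 h3 ->]]]]]; by exists i, j, k, l.
Qed.

Lemma memIJ (i j k l : 'I_n) : val j = (val i).+1 -> val l = (val k).+1 -> val k != val i ->
  (i, j) \in Dset 1 (tperm k l * (tperm i j * 1)).
Proof.
move=> hb hd hc; rewrite Dmem //= !eqxx /= tpermL tpermR !ordeqE.
have -> : i < j by rewrite /= -valE hb.
move: hc; nlia.
Qed.

Lemma Dcard2 (i j k l : 'I_n) : val j = (val i).+1 -> val l = (val k).+1 -> val k != val i ->
  #|Dset 1 (tperm k l * (tperm i j * 1))| = 2.
Proof.
move=> hj hl hki.
set q := if tperm i j k < tperm i j l then (tperm i j k, tperm i j l)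
         else (tperm i j l, tperm i j k).
have hqf : (q.1 == i) && (q.2 == j) = false.
  rewrite /q; case: ifP => _ /=; rewrite !ordeqE !val_tperm; move: hki;
  rewrite hj hl ?valE; crush.
have hq : q \in Dset 1 (tperm k l * (tperm i j * 1)).
  rewrite Dmem //; move: hqf; rewrite /q; case: ifP => hc /= ->;
    rewrite /= !tpermK (eqxx k) (eqxx l) /= ?orbT ?andbT //.
  move/negbT: hc; rewrite -leqNgt leq_eqVlt => /orP [/eqP e|] //.
  have : tperm i j l != tperm i j k by rewrite (inj_eq (@perm_inj _ _)) ordeqE hl; apply/eqP; lia.
  by move/eqP => ne; exfalso; apply: ne; apply: val_inj.
have hd2 : dK_le 2 1 (tperm k l * (tperm i j * 1)).
  exact: (dK_trans (dK_step 1 hj) (dK_step (tperm i j * 1) hl)).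
apply/eqP; rewrite eqn_leq (Dbound hd2) /=.
have hne : (i, j) != q by apply/negP => /eqP e; move: hqf; rewrite -e /= (eqxx i) (eqxx j).
have <- : #|[set (i, j); q]| = 2 by rewrite cards2 hne.
by apply: subset_leq_card; rewrite !subUset !sub1set hq memIJ.
Qed.

Definition tp (i u : nat) := if u == i then i.+1 else if u == i.+1 then i else u.
Lemma NL1 i k x y : k != i -> x < y -> y = x.+1 ->
  ((x == i) && (y == i.+1)) (+) (((tp i x == k) && (tp i y == k.+1)) || ((tp i x == k.+1) && (tp i y == k))) ->
  x = i \/ (x = k /\ (i.+1 < k \/ k.+1 < i)).
Proof. rewrite /tp => h1 h2 h3; crushl. Qed.
Lemma NL2 i k x y : k != i -> x < y -> y != x.+1 ->
  ((x == i) && (y == i.+1)) (+) (((tp i x == k) && (tp i y == k.+1)) || ((tp i x == k.+1) && (tp i y == k))) ->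
  (k = i.+1 /\ x = i /\ y = i.+2) \/ (i = k.+1 /\ x = k /\ y = k.+2).
Proof. rewrite /tp => h1 h2 h3; crushl. Qed.

Lemma NL3 (i k i0 k0 x y : nat) :
  (k = i.+1 /\ x = i /\ y = i.+2) \/ (i = k.+1 /\ x = k /\ y = k.+2) ->
  (k0 = i0.+1 /\ x = i0 /\ y = i0.+2) \/ (i0 = k0.+1 /\ x = k0 /\ y = k0.+2) ->
  (i = i0 /\ k = k0) \/ (i = k0 /\ k = i0).
Proof. lia. Qed.

Lemma lt_card2 (b : bool) m : 3 < m -> m <= b.+1 -> False.
Proof. by case: b => /=; lia. Qed.

Lemma Dmem_nat (i j k l : 'I_n) (p1 p2 : 'I_n) : val j = (val i).+1 -> val l = (val k).+1 ->
  (p1, p2) \in Dset 1 (tperm k l * (tperm i j * 1)) ->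
  p1 < p2 /\
  ((val p1 == val i) && (val p2 == (val i).+1)) (+)
   (((tp (val i) (val p1) == val k) && (tp (val i) (val p2) == (val k).+1)) ||
    ((tp (val i) (val p1) == (val k).+1) && (tp (val i) (val p2) == val k))).
Proof.
move=> hj hl; rewrite Dmem //= !ordeqE !val_tperm hj hl => /andP [h1 h2]; split => //.
Qed.

Lemma tperm_comm (i j k l : 'I_n) : val j = (val i).+1 -> val l = (val k).+1 ->
  (val i).+1 < val k \/ (val k).+1 < val i ->
  tperm k l * (tperm i j * 1) = tperm i j * (tperm k l * 1).
Proof.
move=> hj hl hs; rewrite !mulg1; apply/permP => x; rewrite !permM.
have ik : i != k by rewrite ordeqE; apply/eqP; nlia.
have il : i != l by rewrite ordeqE; apply/eqP; nlia.
have jk : j != k by rewrite ordeqE; apply/eqP; nlia.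
have jl : j != l by rewrite ordeqE; apply/eqP; nlia.
case: (tpermP k l x) => [->|->|/eqP nk /eqP nl].
- by rewrite (tpermD il jl) (tpermD ik jk) tpermL.
- by rewrite (tpermD ik jk) (tpermD il jl) tpermR.
- have ki : k != i by rewrite eq_sym.
  have kj : k != j by rewrite eq_sym.
  have li : l != i by rewrite eq_sym.
  have lj : l != j by rewrite eq_sym.
  case: (tpermP i j x) => [_|_|/eqP ni /eqP nj].
  + by rewrite (tpermD kj lj).
  + by rewrite (tpermD ki li).
  + by rewrite tpermD // eq_sym.
Qed.

Lemma case4 (A : {set 'S_n}) : is_anticode 2 A -> 1 \in A ->
  (forall z, z \in A -> ~~ odd_perm z) -> 5 <= #|A| ->
  exists sg, forall z, z \in A -> dK_le 1 sg z.
Proof.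
move=> hA h1 hev hcard.
set Z := A :\ 1.
have hZ : 3 < #|Z| by move: hcard; rewrite (cardsD1 1 A) h1 add1n ltnS.
have inZ : forall z, z \in Z -> exists i j k l : 'I_n,
    [/\ val j = (val i).+1, val l = (val k).+1, val k != val i &
     z = tperm k l * (tperm i j * 1)].
  move=> z; rewrite !inE => /andP [hz1 hzA].
  exact: rep4 (hA _ _ h1 hzA) (hev _ hzA) hz1.
have h2 : forall z, z \in Z -> #|Dset 1 z| = 2.
  by move=> z /inZ [i [j [k [l [hj hl hki ->]]]]]; apply: Dcard2.
have inj : {in Z &, injective (Dset 1)}.
  move=> z z' hz hz' e; apply: Dset0_eq; apply/setP => p.
  by rewrite (Dset_xor 1) e eqxx andbF inE.
have hm : forall z z', z \in Z -> z' \in Z -> Dset 1 z :&: Dset 1 z' != set0.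
  move=> z z' hz hz'; apply/negP => /eqP e0.
  case: (eqVneq z z') => [ez|nz].
    by move: (h2 _ hz); rewrite -[Dset 1 z]setIid {2}ez e0 cards0.
  have : Dset 1 z :|: Dset 1 z' \subset Dset z z'.
    apply/subsetP => p hp; rewrite (Dset_xor 1).
    have hlt : p.1 < p.2 by move: hp; rewrite !inE => /orP [] /andP [].
    rewrite hlt /=; move: hp; rewrite inE => /orP [] hp.
      have hn' : p \notin Dset 1 z'.
        apply/negP => hp'; have : p \in Dset 1 z :&: Dset 1 z' by rewrite inE hp hp'.
        by rewrite e0 inE.
      by rewrite hp (negbTE hn').
    have hn' : p \notin Dset 1 z.
      apply/negP => hp'; have : p \in Dset 1 z :&: Dset 1 z' by rewrite inE hp hp'.
      by rewrite e0 inE.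
    by rewrite hp (negbTE hn').
  move/subset_leq_card; rewrite cardsU e0 cards0 subn0 (h2 _ hz) (h2 _ hz').
  have hzA : z \in A by move: hz; rewrite inE => /andP [].
  have hzA' : z' \in A by move: hz'; rewrite inE => /andP [].
  by move=> h; have := leq_trans h (Dbound (hA _ _ hzA hzA')).
have [[p1 p2] hp] := family inj h2 hm hZ.
case: (eqVneq (val p2) (val p1).+1) => hadj.
- exists (tperm p1 p2 * 1) => z hz.
  case: (eqVneq z 1) => [->|nz1].
    by have := dK_step (tperm p1 p2 * 1) hadj; rewrite tpermMM.
  have hzZ : z \in Z by rewrite !inE nz1 hz.
  have [i [j [k [l [hj hl hki ez]]]]] := inZ _ hzZ.
  have := hp _ hzZ; rewrite ez => /(Dmem_nat hj hl) [hlt hf].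
  case: (NL1 hki hlt hadj hf) => [e|[e hs]].
  + have [<- <-] := ord_eq_adj hadj hj e; exact: dK_step.
  + have [ek el] := ord_eq_adj hadj hl e.
    rewrite tperm_comm // -ek -el; exact: dK_step.
- exfalso.
  have [z0 hz0] : exists z0, z0 \in Z.
    by apply/set0Pn; apply: contraTneq hZ => ->; rewrite cards0.
  have [i0 [j0 [k0 [l0 [hj0 hl0 hki0 ez0]]]]] := inZ _ hz0.
  have := hp _ hz0; rewrite ez0 => /(Dmem_nat hj0 hl0) [hlt0 hf0].
  have o0 := NL2 hki0 hlt0 hadj hf0.
  have : Z \subset [set z0; tperm i0 j0 * (tperm k0 l0 * 1)].
    apply/subsetP => z hzZ; rewrite !inE.
    have [i [j [k [l [hj hl hki ez]]]]] := inZ _ hzZ.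
    have := hp _ hzZ; rewrite ez => /(Dmem_nat hj hl) [hlt hf].
    have o := NL2 hki hlt hadj hf.
    have [[ei ek]|[ei ek]] := NL3 o o0.
    + have [-> ->] := ord_eq_adj hj hj0 ei; have [-> ->] := ord_eq_adj hl hl0 ek.
      by rewrite ez0 eqxx.
    + have [-> ->] := ord_eq_adj hj hl0 ei; have [-> ->] := ord_eq_adj hl hj0 ek.
      by rewrite eqxx orbT.
  move/subset_leq_card; rewrite cards2 => h; exact: (lt_card2 hZ h).
Qed.

Lemma pick1 (S : {set 'S_n}) : 0 < #|S| -> exists x, x \in S.
Proof. by move=> h; apply/set0Pn; apply: contraTneq h => ->; rewrite cards0. Qed.

Lemma pick2 (S : {set 'S_n}) : 1 < #|S| -> exists x y, [/\ x \in S, y \in S & x != y].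
Proof.
move=> h; have [x hx] := pick1 (ltnW h).
have : 0 < #|S :\ x| by move: h; rewrite (cardsD1 x S) hx.
case/pick1 => y; rewrite !inE => /andP [hyx hy]; exists x, y; split => //.
by rewrite eq_sym.
Qed.

Lemma pick3 (S : {set 'S_n}) : 2 < #|S| ->
  exists x y z, [/\ x \in S, y \in S, z \in S & [/\ x != y, x != z & y != z]].
Proof.
move=> h; have [x hx] := pick1 (ltnW (ltnW h)).
have : 1 < #|S :\ x| by move: h; rewrite (cardsD1 x S) hx.
case/pick2 => y [z [hy hz hyz]]; move: hy hz; rewrite !inE => /andP [hyx hy] /andP [hzx hz].
by exists x, y, z; split => //; split => //; rewrite eq_sym.
Qed.

Lemma mixed (A P Q : {set 'S_n}) (b : bool) : is_anticode 2 A ->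
  P \subset A -> Q \subset A -> (forall z, z \in P -> odd_perm z = b) ->
  (forall z, z \in Q -> odd_perm z = ~~ b) -> 1 < #|P| -> 2 < #|Q| -> False.
Proof.
move=> hA sP sQ hP hQ cP cQ.
have [x1 [x2 [h1 h2 h12]]] := pick2 cP.
have [y1 [y2 [y3 [hy1 hy2 hy3 [n12 n13 n23]]]]] := pick3 cQ.
have inA : forall z, z \in P -> z \in A by move=> z; apply/subsetP.
have inA' : forall z, z \in Q -> z \in A by move=> z; apply/subsetP.
apply: (K h12 n12 n13 n23 (hA _ _ (inA _ h1) (inA _ h2))) => y hy.
have hyQ : y \in Q by move: hy; rewrite !inE => /orP [/eqP ->|/orP [/eqP ->|/eqP ->]].
split.
- apply: dK2_diff; first exact: hA (inA _ h1) (inA' _ hyQ).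
  by rewrite (hP _ h1) (hQ _ hyQ); move: (b) => c; case: c.
- apply: dK2_diff; first exact: hA (inA' _ hyQ) (inA _ h2).
  by rewrite (hP _ h2) (hQ _ hyQ); move: (b) => c; case: c.
Qed.

Lemma core1 (A : {set 'S_n}) : is_anticode 2 A -> 1 \in A -> 5 <= #|A| ->
  exists sg, forall z, z \in A -> dK_le 1 sg z.
Proof.
move=> hA h1 hc.
set B := [set z : 'S_n | odd_perm z].
set O := A :&: B; set E := A :\: B.
have hsum : #|O| + #|E| = #|A| by rewrite cardsID.
have sO : O \subset A by apply/subsetP => z; rewrite !inE => /andP [].
have sE : E \subset A by apply/subsetP => z; rewrite !inE => /andP [].
have hO : forall z, z \in O -> odd_perm z = true by move=> z; rewrite !inE => /andP [].
have hE : forall z, z \in E -> odd_perm z = ~~ true.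
  by move=> z; rewrite !inE => /andP [/negbTE -> _].
have h1E : 1 \in E by rewrite !inE h1 odd_perm1.
case: (leqP #|E| 1) => cE.
  exists 1 => z hz; case: (boolP (odd_perm z)) => oz.
    have ne : odd_perm (1 : 'S_n) != odd_perm z by rewrite odd_perm1 oz.
    have [a [b [hb ->]]] := dK2_diff (hA _ _ h1 hz) ne.
    exact: dK_step.
  have hzE : z \in E by rewrite !inE hz oz.
  case: (eqVneq z 1) => [->|nz]; first exact: dK_refl.
  have : #|[set z; 1]| <= #|E| by apply: subset_leq_card; rewrite !subUset !sub1set hzE h1E.
  by rewrite cards2 nz => h; have := leq_trans h cE.
case: (leqP #|O| 0) => cO.
  have O0 : O = set0 by apply: cards0_eq; apply/eqP; rewrite -leqn0.
  apply: case4 => // z hz; apply/negP => oz.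
  have : z \in O by rewrite !inE hz oz.
  by rewrite O0 inE.
case: (leqP #|O| 1) => cO1.
  have [y hy] := pick1 cO.
  exists y => z hz; case: (boolP (odd_perm z)) => oz.
    have hzO : z \in O by rewrite !inE hz oz.
    case: (eqVneq z y) => [->|nz]; first exact: dK_refl.
    have : #|[set z; y]| <= #|O| by apply: subset_leq_card; rewrite !subUset !sub1set hzO hy.
    by rewrite cards2 nz => h; have := leq_trans h cO1.
  have hyA : y \in A by apply: (subsetP sO).
  have ne : odd_perm y != odd_perm z by rewrite (hO _ hy) (negbTE oz).
  have [a [b [hb ->]]] := dK2_diff (hA _ _ hyA hz) ne.
  exact: dK_step.
exfalso.
case: (leqP 3 #|O|) => c3.
  exact: (mixed hA sE sO hE (fun z hz => hO z hz) cE c3).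
have c3' : 2 < #|E| by move: hsum hc c3; lia.
exact: (mixed hA sO sE hO hE cO1 c3').
Qed.

Lemma core (A : {set 'S_n}) : is_anticode 2 A -> 5 <= #|A| ->
  exists sg, forall z, z \in A -> dK_le 1 sg z.
Proof.
move=> hA hc.
have [x hx] := pick1 (leq_trans (isT : 0 < 5) hc).
set A' := [set z * x^-1 | z in A].
have hA' : is_anticode 2 A'.
  move=> u v /imsetP [z hz ->] /imsetP [w hw ->]; exact: dK_mulr (hA _ _ hz hw).
have h1 : 1 \in A' by apply/imsetP; exists x => //; rewrite mulgV.
have hc' : 5 <= #|A'| by rewrite card_imset //; apply: mulIg.
have [sg hsg] := core1 hA' h1 hc'.
exists (sg * x) => z hz.
have := hsg (z * x^-1) (imset_f _ hz).
by move/(dK_mulr x); rewrite mulgKV.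
Qed.

Definition ball (sg : 'S_n) : {set 'S_n} :=
  [set p : 'S_n | (p == sg) ||
    [exists q : 'I_n * 'I_n, (val q.2 == (val q.1).+1) && (p == tperm q.1 q.2 * sg)]].

Lemma ballP sg p : p \in ball sg <-> dK_le 1 sg p.
Proof.
split.
- rewrite inE => /orP [/eqP ->|/existsP [q /andP [/eqP hq /eqP ->]]].
    exact: dK_refl.
  exact: dK_step.
- case=> l [hl ha ->]; rewrite inE.
  case: l hl ha => [|q [|r l]] //= _; first by rewrite eqxx.
  rewrite /adjacent_pairs /= andbT => hq; apply/orP; right; apply/existsP; exists q.
  by rewrite hq eqxx.
Qed.

Definition gball (sg : 'S_n) (i : 'I_n) : 'S_n :=
  if insub (val i).+1 is Some j then tperm i j * sg else sg.

Lemma gball_in sg i : gball sg i \in ball sg.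
Proof.
rewrite /gball; case: insubP => [j _ hj|_]; last by apply/ballP; exact: dK_refl.
by apply/ballP; apply: dK_step.
Qed.

Lemma ball_card sg : 0 < n -> #|ball sg| <= n.
Proof.
move=> hn.
have sub : ball sg \subset [set gball sg i | i in 'I_n].
  apply/subsetP => p /ballP [l [hl ha ->]].
  case: l hl ha => [|q [|r l]] //= _.
    have hn' : n.-1 < n by rewrite ltn_predL.
    move=> _; apply/imsetP; exists (Ordinal hn') => //.
    rewrite /gball; case: insubP => //= j _ hj; exfalso.
    by have := ltn_ord j; move: hj hn; nlia.
  rewrite /adjacent_pairs /= andbT => /eqP hq; apply/imsetP; exists q.1 => //.
  rewrite /gball; case: insubP => [j _ hj|].
    by congr (tperm _ _ * _); apply: val_inj; rewrite /= hj hq.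
  by rewrite -hq ltn_ord.
apply: leq_trans (subset_leq_card sub) _.
by apply: leq_trans (leq_imset_card _ _) _; rewrite card_ord.
Qed.

Lemma gball_inj sg : injective (gball sg).
Proof.
move=> i i'; rewrite /gball.
have key : forall (i j i' : 'I_n) (j' : 'I_n), val j = (val i).+1 -> val j' = (val i').+1 ->
    tperm i j = tperm i' j' -> i = i'.
  move=> a b a' b' hb hb' e.
  have := congr1 (fun s : 'S_n => s a) e; rewrite /= tpermL.
  case: tpermP => [//|ea|/eqP na /eqP nb].
    by move=> eb; exfalso; move: ea eb => /(congr1 val) ea /(congr1 val) eb; nlia.
  by move=> eb; exfalso; move: eb => /(congr1 val) eb; nlia.
have key1 : forall (i j : 'I_n), val j = (val i).+1 -> tperm i j <> 1.
  move=> a b hb e; have := congr1 (fun s : 'S_n => s a) e; rewrite /= tpermL perm1.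
  by move/(congr1 val); nlia.
case: insubP => [j _ hj|hi]; case: insubP => [j' _ hj'|hi'].
- by move/mulIg; apply: key.
- by rewrite -{2}(mul1g sg) => /mulIg e; exfalso; exact: key1 hj e.
- by rewrite -{1}(mul1g sg) => /esym/mulIg e; exfalso; exact: key1 hj' e.
- by move=> _; apply: val_inj; move: hi hi' (ltn_ord i) (ltn_ord i'); nlia.
Qed.

Lemma ball_card_ge sg : n <= #|ball sg|.
Proof.
have sub : [set gball sg i | i in 'I_n] \subset ball sg.
  by apply/subsetP => p /imsetP [i _ ->]; apply: gball_in.
by apply: leq_trans (subset_leq_card sub); rewrite card_imset ?card_ord //; apply: gball_inj.
Qed.

Lemma ball_anticode sg : is_anticode 2 (ball sg).
Proof.
move=> x y /ballP hx /ballP hy; exact: (dK_trans (dK_sym hx) hy).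
Qed.
End S2.

Theorem theorem6 (n : nat) (hn : 5 <= n) (A : {set 'S_n}) :
  optimal_anticode 2 A ->
  (exists sigma : 'S_n, forall pi : 'S_n, pi \in A <-> dK_le 1 sigma pi)
  /\ #|A| = n.
Proof.
case=> hA hopt.
have hnA : n <= #|A| := leq_trans (@ball_card_ge n 1) (hopt _ (@ball_anticode n 1)).
have [sg hsg] := core hA (leq_trans hn hnA).
have sub : A \subset ball sg by apply/subsetP => z hz; apply/ballP; exact: hsg.
have hb := ball_card sg (leq_trans (isT : 0 < 5) hn).
have eA : A = ball sg.
  by apply/eqP; rewrite eqEcard sub /=; apply: leq_trans hb hnA.
split.
- by exists sg => pi; rewrite eA; exact: ballP.
- by apply/eqP; rewrite eqn_leq hnA eA hb.
Qed.
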